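(* Let $p>0$, let $f$ be a $p$-knowable Boolean function, and let $q>0$ with $pq>1$. Then for every integer $n\ge1$, $$\sum_{k>n}I_k(f)^q\le\mathbb E[(\max W(f))^p]^q\,\frac{n^{1-pq}}{pq-1}.$$ In particular, if $f$ is $p$-knowable for some $p>\tfrac12$, then $H(f)=\sum_k I_k(f)^2<\infty$.
   Context: Let $\Omega=\{-1,1\}$ and $\Omega^\infty=\{-1,1\}^{\mathbb N}$ with the uniform product probability measure; $\omega$ denotes a uniformly random element. A Boolean function is a measurable map $f:\Omega^\infty\to\Omega$. $\omega^{(k)}$ is $\omega$ with bit $k$ flipped; $I_k(f)=\mathbb P(f(\omega^{(k)})\ne f(\omega))$, $H(f)=\sum_kI_k(f)^2$. A set $W\subseteq\mathbb N$ is a witness set for $f$ at $\omega$ if there is an event $A$ with $\mathbb P(A)=1$ such that for all $\tilde\omega\in A$: if $\tilde\omega_i=\omega_i$ for all $i\in W$ then $f(\tilde\omega)=f(\omega)$. $f$ is finitary if almost surely a finite witness set exists; then $W(f)(\omega)$ denotes the least finite witness set in the order: smaller maximum first, then smaller cardinality, then lexicographic. $f$ is $p$-knowable if it is finitary and $\mathbb E[(\max W(f))^p]<\infty$. *)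

(* Defs.v *)
From HB Require Import structures.
From mathcomp Require Import all_boot all_order all_algebra.
From mathcomp Require Import all_classical all_reals all_analysis.
Set Implicit Arguments. Unset Strict Implicit. Unset Printing Implicit Defensive.
Import Order.TTheory GRing.Theory Num.Theory.
Local Open Scope classical_set_scope.
Local Open Scope ring_scope.

(* Omega = {-1,1} is encoded by bool (true = +1, false = -1);
   Omega^infty = {-1,1}^N is nat -> bool. *)
Definition cube := nat -> bool.

Definition coord_events : set (set cube) :=
  fun A => exists (i : nat) (b : bool), A = [set w : cube | w i = b].

Definition Cube := g_sigma_algebraType coord_events.

(* P is the uniform product probability measure: every cylinder fixing
   the first n coordinates has probability 2^-n.  These values determine
   the measure uniquely on the product sigma-algebra (pi-lambda). *)
Definition uniform_product {R : realType} (P : probability Cube R) : Prop :=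
  forall (n : nat) (b : nat -> bool),
    P [set w : Cube | forall i, (i < n)%N -> w i = b i] = ((2%:R ^- n : R))%:E.

Definition flip (k : nat) (w : cube) : cube :=
  fun i => if i == k then ~~ w i else w i.

Definition influence {R : realType} (P : probability Cube R) (f : Cube -> bool)
  (k : nat) : R :=
  fine (P [set w : Cube | f (flip k w) != f w]).

Definition Hf {R : realType} (P : probability Cube R) (f : Cube -> bool) : \bar R :=
  \sum_(k <oo) ((influence P f k) ^+ 2)%:E.

Definition witness {R : realType} (P : probability Cube R) (f : Cube -> bool)
  (w : Cube) (W : set nat) : Prop :=
  exists A : set Cube, measurable A /\ P A = 1%E /\
    forall wt : Cube, A wt -> (forall i, W i -> wt i = w i) -> f wt = f w.

Definition finitary {R : realType} (P : probability Cube R) (f : Cube -> bool) : Prop :=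
  {ae P, forall w : Cube, exists W : set nat, finite_set W /\ witness P f w W}.

(* Finite subsets of nat represented by their strictly increasing enumeration. *)
Fixpoint lexle (s t : seq nat) : bool :=
  match s, t with
  | [::], _ => true
  | _ :: _, [::] => false
  | x :: s', y :: t' => (x < y)%N || ((x == y) && lexle s' t')
  end.

(* max of a finite set (0 for the empty set) *)
Definition smax (s : seq nat) : nat := \max_(i <- s) i.

Definition wle (s t : seq nat) : bool :=
  (smax s < smax t)%N ||
  ((smax s == smax t) &&
   ((size s < size t)%N || ((size s == size t) && lexle s t))).

Definition least_witness {R : realType} (P : probability Cube R) (f : Cube -> bool)
  (w : Cube) (s : seq nat) : Prop :=
  sorted ltn s /\ witness P f w [set i | i \in s] /\
  forall t : seq nat, sorted ltn t -> witness P f w [set i | i \in t] -> wle s t.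

(* W(f)(w): the least finite witness set (empty seq if none exists,
   which happens only on a null set when f is finitary) *)
Definition Wf {R : realType} (P : probability Cube R) (f : Cube -> bool)
  (w : Cube) : seq nat :=
  xget [::] (least_witness P f w).

Definition maxW {R : realType} (P : probability Cube R) (f : Cube -> bool)
  (w : Cube) : nat := smax (Wf P f w).

Definition knowable {R : realType} (P : probability Cube R) (p : R)
  (f : Cube -> bool) : Prop :=
  finitary P f /\
  (\int[P]_w (((maxW P f w)%:R : R) `^ p)%:E < +oo)%E.

Definition EmaxWp {R : realType} (P : probability Cube R) (p : R)
  (f : Cube -> bool) : R :=
  fine (\int[P]_w (((maxW P f w)%:R : R) `^ p)%:E).

(* Main.v *)
Require Import Defs.
From HB Require Import structures.
From mathcomp Require Import all_boot all_order all_algebra.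
From mathcomp Require Import all_classical all_reals all_analysis.
From mathcomp Require Import ring lra.
Import Order.TTheory GRing.Theory Num.Theory.

Module P1.
Local Open Scope classical_set_scope.
Local Open Scope ring_scope.

Definition upd (k : nat) (b : bool) (w : cube) : cube :=
  fun i => if i == k then b else w i.

Definition dep (k : nat) (Q : set Cube) :=
  forall w w' : Cube, (forall i, (i < k)%N -> w i = w' i) -> (Q w <-> Q w').

Lemma coord_meas i b : measurable ([set w | w i = b] : set Cube).
Proof. apply: sub_sigma_algebra; by exists i, b. Qed.

Lemma dep_meas k : forall Q, dep k Q -> measurable Q.
Proof.
elim: k => [|k IH] Q dQ.
  have [[w0 Qw0]|nQ] := pselect (exists w, Q w).
    suff -> : Q = setT by exact: measurableT.
    apply/seteqP; split => // w _; exact/(dQ w0 w).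
  suff -> : Q = set0 by exact: measurable0.
  apply/seteqP; split => // w Qw; apply: nQ; by exists w.
have -> : Q = ([set w | w k = true] `&` [set w | Q (upd k true w)]) `|`
              ([set w | w k = false] `&` [set w | Q (upd k false w)]).
  apply/seteqP; split => w /=.
    have E : forall b, w k = b -> (Q w <-> Q (upd k b w)).
      move=> b wkb; apply: dQ => i _; rewrite /upd; case: eqP => // ->; by rewrite wkb.
    case wk: (w k) => Qw; [left|right]; split => //; exact/(E _ wk).
  have E : forall b, w k = b -> (Q w <-> Q (upd k b w)).
    move=> b wkb; apply: dQ => i _; rewrite /upd; case: eqP => // ->; by rewrite wkb.
  by case=> -[wk Qw]; apply/(E _ wk).
apply: measurableU; apply: measurableI; try exact: coord_meas;
  apply: IH => w w' ww'; apply: dQ => i ik; rewrite /upd; case: eqP => // /eqP ne;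
  apply: ww'; by rewrite ltn_neqAle ne -ltnS.
Qed.

End P1.
Import P1.

Module P2.
Local Open Scope classical_set_scope.
Local Open Scope ring_scope.

Definition cyl (m : nat) (b : cube) : set Cube :=
  [set w : Cube | forall i, (i < m)%N -> w i = b i].

Lemma dep_cyl m b : dep m (cyl m b).
Proof. move=> w w' ww'; split => H i im; rewrite -H //; by rewrite ww'. Qed.

Lemma cyl_meas m b : measurable (cyl m b).
Proof. exact: (@dep_meas _ _ (dep_cyl m b)). Qed.

Lemma flip_meas k : measurable_fun setT (flip k : Cube -> Cube).
Proof.
apply: (@measurability _ _ Cube Cube setT (flip k) coord_events) => //.
move=> _ [_ [i [b ->]] <-].
have -> : setT `&` (flip k : Cube -> Cube) @^-1` [set w | w i = b] =
   [set w : Cube | w i = if i == k then ~~ b else b].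
  apply/seteqP; split => w /=; rewrite /flip; case: eqP => _; case: (w i); case: b => //=; try tauto; by case.
exact: coord_meas.
Qed.

Section Unique.
Variables (R : realType) (mu1 mu2 : {measure set Cube -> \bar R}).
Hypothesis agree : forall m b, mu1 (cyl m b) = mu2 (cyl m b).

Lemma agree_dep_aux n : forall m A b, dep (n + m) A ->
  mu1 (A `&` cyl m b) = mu2 (A `&` cyl m b).
Proof.
elim: n => [|n IH] m A b dA.
  have [Ab|nAb] := pselect (A b).
    have -> : A `&` cyl m b = cyl m b.
      apply/seteqP; split => w; first by case.
      move=> wc; split => //; apply/(dA w b) => //.
    exact: agree.
  have -> : A `&` cyl m b = set0.
    apply/seteqP; split => // w [Aw wc]; apply: nAb; exact/(dA w b).
  by rewrite !measure0.
have mA : measurable A by exact: (@dep_meas _ _ dA).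
have E : A `&` cyl m b = (A `&` cyl m.+1 (upd m true b)) `|` (A `&` cyl m.+1 (upd m false b)).
  apply/seteqP; split => w /=.
    move=> [Aw wc]; case wm: (w m); [left|right]; split => // i;
      rewrite ltnS leq_eqVlt => /orP [/eqP ->|im]; rewrite /upd ?eqxx //;
      by rewrite (ltn_eqF im) wc.
  case=> -[Aw wc]; split => // i im; rewrite wc ?(ltnW im) // /upd ?(ltn_eqF im) //;
    by apply: ltnW.
have D : (A `&` cyl m.+1 (upd m true b)) `&` (A `&` cyl m.+1 (upd m false b)) = set0.
  apply/seteqP; split => // w [[_ h1] [_ h2]].
  by move: (h1 m (ltnSn m)) (h2 m (ltnSn m)); rewrite /upd eqxx => ->.
have mI : forall bb, measurable (A `&` cyl m.+1 bb).
  by move=> bb; apply: measurableI => //; exact: cyl_meas.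
rewrite E !measureU //; congr (_ + _)%E; apply: IH; by rewrite addnS -addSn.
Qed.

Lemma agree_dep n A : dep n A -> mu1 A = mu2 A.
Proof.
move=> dA; have := @agree_dep_aux n 0 A (fun _ => true).
by rewrite addn0 => /(_ dA); rewrite /cyl; rewrite (_ : [set w : Cube | _] = setT) ?setIT //;
  apply/seteqP; split.
Qed.

Hypothesis fin1 : (mu1 setT < +oo)%E.

Lemma agree_all A : measurable A -> mu1 A = mu2 A.
Proof.
apply: (measure_unique [set A | exists n, dep n A] (fun _ => setT)).
- apply/seteqP; split.
    apply: smallest_sub; first exact: smallest_sigma_algebra.
    move=> _ [i [b ->]]; apply: sub_sigma_algebra; exists i.+1 => w w' ww'.
    by rewrite /= ww'.
  apply: smallest_sub; first exact: smallest_sigma_algebra.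
  move=> A0 [n dA]; exact: (@dep_meas _ _ dA).
- move=> A1 A2 [n1 d1] [n2 d2]; exists (maxn n1 n2) => w w' ww'.
  have h1 := d1 w w'; have h2 := d2 w w'.
  rewrite /=; split => -[a b]; split; try (apply/h1 => // i ii; apply: ww'; 
    by rewrite (leq_trans ii) // leq_maxl); try (apply/h2 => // i ii; apply: ww'; 
    by rewrite (leq_trans ii) // leq_maxr).
- by move=> _; exists 0%N.
- by rewrite bigcup_const.
- by move=> A0 [n dA]; exact: agree_dep dA.
- by move=> _.
Qed.
End Unique.

End P2.
Import P2.

Module P3.
Local Open Scope classical_set_scope.
Local Open Scope ring_scope.

Lemma flip_cyl k m b : (flip k : Cube -> Cube) @^-1` cyl m b = cyl m (flip k b).
Proof.
apply/seteqP; split => w /= h i im; have := h i im; rewrite /flip;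
  case: eqP => // _; case: (w i); case: (b i) => //.
Qed.

Lemma flip_pres (R : realType) (P : probability Cube R) k (A : set Cube) :
  uniform_product P -> measurable A -> P ((flip k : Cube -> Cube) @^-1` A) = P A.
Proof.
move=> uP mA.
have := @agree_all R P (pushforward P (flip k : Cube -> Cube)) _ _ A mA.
rewrite /pushforward => -> //.
- exact: flip_meas.
- move=> _ m b /=; rewrite /pushforward flip_cyl; have := uP m b; have := uP m (flip k b).
  by rewrite /cyl => -> ->.
- apply: (@le_lt_trans _ _ 1%E); [exact: probability_le1|exact: ltry].
Qed.


End P3.
Import P3.

Module P4.
Local Open Scope classical_set_scope.
Local Open Scope ring_scope.

Section Main.
Variables (R : realType) (P : probability Cube R) (f : Cube -> bool).
Hypothesis uP : uniform_product P.
Hypothesis mf : measurable_fun setT f.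

Lemma null_sub (A B : set Cube) : measurable A -> measurable B -> A `<=` B ->
  P B = 0%E -> P A = 0%E.
Proof.
move=> mA mB AB PB; apply/eqP; rewrite -measure_le0 -PB.
by apply: le_measure => //; rewrite inE.
Qed.

Lemma null_U2 (A B : set Cube) : measurable A -> measurable B ->
  P A = 0%E -> P B = 0%E -> P (A `|` B) = 0%E.
Proof.
move=> mA mB PA PB; apply/eqP; rewrite -measure_le0.
have e : (P A + P B = 0)%E by rewrite PA PB adde0.
rewrite (le_trans (measureU2 _ mA mB)) //.
by rewrite le_eqVlt; apply/orP; left; apply/eqP; exact: e.
Qed.

Lemma null_cyl n : forall E, measurable E -> (forall w, P (cyl n w `&` E) = 0%E) -> P E = 0%E.
Proof.
elim: n => [|n IH] E mE h.
  have := h (fun _ => true); rewrite (_ : cyl 0 _ = setT) ?setTI //.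
  by apply/seteqP; split.
apply: IH => // w.
apply: (@null_sub _ ((cyl n.+1 (upd n true w) `&` E) `|` (cyl n.+1 (upd n false w) `&` E))).
- by apply: measurableI => //; exact: cyl_meas.
- by apply: measurableU; apply: measurableI => //; exact: cyl_meas.
- move=> v [vc vE]; case vn: (v n); [left|right]; split => // i;
    rewrite ltnS leq_eqVlt => /orP [/eqP ->|im]; rewrite /upd ?eqxx //;
    by rewrite (ltn_eqF im) vc.
- by apply: null_U2; try (apply: measurableI => //; exact: cyl_meas); apply: h.
Qed.

Lemma fset_meas (b : bool) : measurable [set v : Cube | f v = b].
Proof.
have hb : measurable ([set b] : set bool) by [].
have := mf measurableT _ hb.
by rewrite setTI.
Qed.

Lemma fflip_meas k (b : bool) : measurable [set v : Cube | f (flip k v) = b].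
Proof.
have hb : measurable ([set b] : set bool) by [].
have := (measurableT_comp mf (flip_meas k)) measurableT _ hb.
by rewrite setTI.
Qed.

Definition Dk k := [set w : Cube | f (flip k w) != f w].

Lemma Dk_meas k : measurable (Dk k).
Proof.
have -> : Dk k = ([set w | f (flip k w) = true] `&` [set w | f w = false]) `|`
                 ([set w | f (flip k w) = false] `&` [set w | f w = true]).
  apply/seteqP; split => w; rewrite /Dk /=; case: (f w); case: (f (flip k w)) => //=; try (by left); try (by right); by case => -[].
by apply: measurableU; apply: measurableI; (exact: fset_meas || exact: fflip_meas).
Qed.

Definition fne (c : bool) := [set v : Cube | f v != c].

Lemma fne_meas c : measurable (fne c).
Proof.
have -> : fne c = [set v | f v = ~~ c].
  by apply/seteqP; split => v; rewrite /fne /=; case: (f v); case: c.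
exact: fset_meas.
Qed.

Definition Good k (w : Cube) := exists c, P (cyl k w `&` fne c) = 0%E.

Lemma cyl_eq k (w v : Cube) : cyl k w v -> cyl k v = cyl k w.
Proof.
move=> h; apply/seteqP; split => u /= hu i ik; rewrite hu //; by rewrite h.
Qed.

Lemma Good_dep k : dep k (Good k).
Proof.
move=> w w' ww'; rewrite /Good (@cyl_eq k w w') //.
move=> i ik; by rewrite ww'.
Qed.

Definition Bad k := Dk k `&` Good k.

Lemma Bad_meas k : measurable (Bad k).
Proof. apply: measurableI; [exact: Dk_meas|exact: (@dep_meas _ _ (Good_dep k))]. Qed.

Lemma flip_cyl_mem k (w v : Cube) : cyl k w v -> cyl k w (flip k v).
Proof. move=> h i ik; rewrite /flip (ltn_eqF ik); exact: h. Qed.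

Lemma Bad_null k : P (Bad k) = 0%E.
Proof.
apply: (@null_cyl k) => [|w0]; first exact: Bad_meas.
have [[c Pc]|nG] := pselect (Good k w0).
  pose E := cyl k w0 `&` fne c.
  have mE : measurable E by apply: measurableI; [exact: cyl_meas|exact: fne_meas].
  apply: (@null_sub _ (E `|` ((flip k : Cube -> Cube) @^-1` E))).
  - apply: measurableI; [exact: cyl_meas|exact: Bad_meas].
  - apply: measurableU => //.
    have := flip_meas k measurableT _ mE; by rewrite setTI.
  - move=> v [vc [vD _]]; rewrite /E /fne /=.
    have := @flip_cyl_mem k _ _ vc => vc'.
    move: vD; rewrite /Dk /= => vD.
    case: (eqVneq (f v) c) => e; [right|left]; split => //; by rewrite -e.
  - apply: null_U2 => //.
      have := flip_meas k measurableT _ mE; by rewrite setTI.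
    by rewrite flip_pres.
have -> : cyl k w0 `&` Bad k = set0.
  apply/seteqP; split => // v [vc [_ Gv]]; apply: nG.
  by rewrite /Good -(@cyl_eq k _ _ vc).
exact: measure0.
Qed.

End Main.

End P4.
Import P4.

Module P5.
Local Open Scope classical_set_scope.

Lemma nat_min (Q : nat -> Prop) : (exists n, Q n) -> exists m, Q m /\ forall n, Q n -> (m <= n)%N.
Proof.
move=> ex.
have ex' : exists n, `[< Q n >] by case: ex => n Qn; exists n; exact/asboolP.
case: (ex_minnP ex') => m /asboolP Qm h; exists m; split => // n Qn; apply: h; exact/asboolP.
Qed.

Lemma lexmin z : forall (Q : seq nat -> Prop), (exists s, Q s /\ size s = z) ->
  exists s, Q s /\ size s = z /\ forall t, Q t -> size t = z -> lexle s t.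
Proof.
elim: z => [|z IH] Q.
  by case=> s [Qs /size0nil sz]; subst s; exists [::].
move=> ex.
have [m [[tl [Qm sz]] mmin]] : exists m, (exists tl, Q (m :: tl) /\ size tl = z) /\
  forall n, (exists tl, Q (n :: tl) /\ size tl = z) -> (m <= n)%N.
  apply: nat_min; case: ex => -[|h tl] [Qs //] [sz]; by exists h, tl.
have [s' [Qs' [sz' hs']]] := IH (fun tl => Q (m :: tl)) (ex_intro _ tl (conj Qm sz)).
exists (m :: s'); split => //; split; first by rewrite /= sz'.
move=> [|y t'] // Qt [szt] /=.
have my := mmin y (ex_intro _ t' (conj Qt szt)).
move: my; rewrite leq_eqVlt => /orP [/eqP e|->] //; subst y.
rewrite ltnn eqxx /=; exact: hs'.
Qed.

Lemma least_exists (Wt : seq nat -> Prop) :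
  (exists t, sorted ltn t /\ Wt t) ->
  exists s, sorted ltn s /\ Wt s /\ forall t, sorted ltn t -> Wt t -> wle s t.
Proof.
move=> ex.
have [m [[t0 [[st0 Wt0] e0]] mmin]] := nat_min (fun n => exists t, (sorted ltn t /\ Wt t) /\ smax t = n)
   (let: ex_intro t h := ex in ex_intro _ (smax t) (ex_intro _ t (conj h erefl))).
have [z [[t1 [[[st1 Wt1] e1] sz1]] zmin]] := nat_min (fun n => exists t, ((sorted ltn t /\ Wt t) /\ smax t = m) /\ size t = n)
   (ex_intro _ (size t0) (ex_intro _ t0 (conj (conj (conj st0 Wt0) e0) erefl))).
have [s [[[ss Ws] es] [szs hs]]] := lexmin z (fun t => (sorted ltn t /\ Wt t) /\ smax t = m)
   (ex_intro _ t1 (conj (conj (conj st1 Wt1) e1) sz1)).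
exists s; split => //; split => // t st Wt'.
have mt := mmin (smax t) (ex_intro _ t (conj (conj st Wt') erefl)).
rewrite /wle es; move: mt; rewrite leq_eqVlt => /orP [/eqP emt|->] //.
have zt := zmin (size t) (ex_intro _ t (conj (conj (conj st Wt') (esym emt)) erefl)).
rewrite emt eqxx /= szs; move: zt; rewrite leq_eqVlt => /orP [/eqP ezt|->]; rewrite ?orbT //.
rewrite ltnn -ezt ltnn eqxx /= hs //; by rewrite emt.
Qed.

Lemma finite_sorted (W : set nat) : finite_set W ->
  exists t, sorted ltn t /\ [set i | i \in t] = W.
Proof.
move/finite_seqP => [s ->]; exists (sort leq (undup s)); split.
  by rewrite ltn_sorted_uniq_leq sort_uniq undup_uniq (sort_sorted leq_total).
by apply/seteqP; split => i /=; rewrite mem_sort mem_undup.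
Qed.

End P5.
Import P5.

Module P6.
Local Open Scope classical_set_scope.
Local Open Scope ring_scope.

Section Main2.
Variables (R : realType) (P : probability Cube R) (f : Cube -> bool).
Hypothesis uP : uniform_product P.
Hypothesis mf : measurable_fun setT f.

Lemma Wf_least (w : Cube) :
  (exists W, finite_set W /\ witness P f w W) -> least_witness P f w (Wf P f w).
Proof.
move=> [W [fW wW]]; apply: xgetPex.
have [t [st tW]] := @finite_sorted W fW.
have [s [ss [Ws hs]]] := @least_exists (fun t => witness P f w [set i | i \in t])
  (ex_intro _ t (conj st (eq_ind_r (fun X => witness P f w X) wW tW))).
by exists s; split.
Qed.

Lemma sub_big k (N0 : set Cube) :
  ~` [set w | exists W, finite_set W /\ witness P f w W] `<=` N0 ->
  Dk f k `\` (@Bad R P f k `|` N0) `<=` [set w | (k <= maxW P f w)%N].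
Proof.
move=> sub w [wD nBN]; rewrite /=; rewrite leqNgt; apply/negP => lt.
have exW : exists W, finite_set W /\ witness P f w W.
  apply: contrapT => h; apply: nBN; right; exact: sub.
have [ss [[A [mA [PA hA]]] _]] := @Wf_least w exW.
apply: nBN; left; split => //; exists (f w).
apply: (@null_sub R P _ (~` A)).
- by apply: measurableI; [exact: cyl_meas|exact: (@fne_meas f mf)].
- exact: measurableC.
- move=> v [vc vne] Av; move: vne; rewrite /fne /= => /eqP; apply; apply: hA => //.
  move=> i /= iW; apply: vc; apply: leq_ltn_trans lt.
  rewrite /maxW /smax; exact: (@leq_bigmax_seq _ _ predT id).
- by rewrite probability_setC // PA subee.
Qed.

End Main2.

Section Main3.
Variables (R : realType) (P : probability Cube R) (f : Cube -> bool).
Hypothesis uP : uniform_product P.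
Hypothesis mf : measurable_fun setT f.

Lemma infl_int (p : R) (p0 : 0 < p) (fin : finitary P f) k :
  ((k%:R `^ p)%:E * P (Dk f k) <= \int[P]_w ((maxW P f w)%:R `^ p)%:E)%E.
Proof.
move: fin; rewrite /finitary. move=> [N0 [mN0 PN0 sub]].
have mX : measurable (Bad R P f k `|` N0).
  by apply: measurableU => //; exact: (@Bad_meas R P f mf k).
have mB : measurable (Dk f k `\` (Bad R P f k `|` N0)).
  by apply: measurableD => //; exact: (@Dk_meas f mf k).
have s1 : (P (Dk f k) <= P (Dk f k `\` (Bad R P f k `|` N0)))%E.
  rewrite (@le_trans _ _ (P ((Dk f k `\` (Bad R P f k `|` N0)) `|` (Bad R P f k `|` N0)))) //.
    apply: le_measure; rewrite ?inE //; first exact: (@Dk_meas f mf k).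
      exact: measurableU.
    by move=> w Dw; have [h|h] := pselect ((Bad R P f k `|` N0) w); [right|left].
  apply: (le_trans (measureU2 _ mB mX)); rewrite -[leRHS]adde0; apply: leeD => //.
  rewrite measure_le0; apply/eqP.
  by apply: null_U2 => //; [exact: (@Bad_meas R P f mf k)|exact: (@Bad_null R P f uP mf k)].
have hsub := @sub_big R P f mf k N0 sub.
apply: (le_trans (lee_wpmul2l _ s1)); first by rewrite lee_fin powR_ge0.
rewrite ge0_integralTE; last by move=> x; rewrite lee_fin powR_ge0.
apply: ereal_sup_ubound => /=.
exists (scale_nnsfun (indic_nnsfun R mB) (powR_ge0 k%:R p)).
  move=> x /=; rewrite /measurable_realfun.mindic indicE lee_fin.
  have [xB|xB] := boolP (x \in Dk f k `\` (Bad R P f k `|` N0)).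
    rewrite mulr1; apply: ge0_ler_powR; rewrite ?nnegrE ?ler0n ?(ltW p0) // ler_nat.
    apply: hsub; by rewrite inE in xB.
  by rewrite mulr0 powR_ge0.
by rewrite sintegralrM sintegral_indic.
Qed.
End Main3.

End P6.
Import P6.

Module P7.
Local Open Scope ring_scope.

Section Anal.
Variable R : realType.

Lemma ln_le_sub1 (y : R) : 0 < y -> ln y <= y - 1.
Proof.
move=> y0; have := expR_ge1Dx (ln y); rewrite lnK ?posrE //; lra.
Qed.

Lemma key_ineq (s x : R) : 1 < s -> 1 < x ->
  (s - 1) * x `^ (- s) <= (x - 1) `^ (1 - s) - x `^ (1 - s).
Proof.
move=> s1 x1.
have x0 : 0 < x by lra.
pose y := (x - 1) / x.
have y0 : 0 < y by rewrite /y divr_gt0 //; lra.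
have xy : x - 1 = x * y by rewrite /y mulrCA divff ?mulr1 // gt_eqF.
have hy : y - 1 = - x^-1 by rewrite /y mulrBl divff ?gt_eqF //; lra.
have lny : ln y <= - x^-1 by rewrite -hy; exact: ln_le_sub1.
have e1 : (1 - s) * ln y >= (s - 1) / x.
  have : (s - 1) * (- ln y) >= (s - 1) * x^-1.
    by apply: ler_wpM2l; lra.
  lra.
have e2 : y `^ (1 - s) >= 1 + (s - 1) / x.
  rewrite /powR gt_eqF //; apply: le_trans (expR_ge1Dx _); lra.
have xs : x `^ (1 - s) = x * x `^ (- s).
  rewrite powRD; last by rewrite (gt_eqF x0) implybT.
  congr (_ * _); apply: powRr1; exact: ltW.
rewrite xy powRM; [|exact: ltW|exact: ltW]; rewrite xs.
have xs0 : 0 <= x `^ (- s) by exact: powR_ge0.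
have : x * x `^ (- s) * (y `^ (1 - s) - 1) >= x * x `^ (- s) * ((s - 1) / x).
  apply: ler_wpM2l; first by rewrite mulr_ge0 // ltW.
  lra.
have -> : x * x `^ (- s) * ((s - 1) / x) = (s - 1) * x `^ (- s).
  by field; rewrite gt_eqF.
move=> h; rewrite mulrBr mulr1 in h; lra.
Qed.

End Anal.

End P7.
Import P7.

Module P8.
Local Open Scope ring_scope.

Section Anal2.
Variable R : realType.

Lemma tail_sum (s : R) (n j : nat) : 1 < s -> (1 <= n)%N ->
  \sum_(n.+1 <= k < n.+1 + j) (k%:R `^ (-s)) <=
  (n%:R `^ (1 - s) - (n + j)%:R `^ (1 - s)) / (s - 1).
Proof.
move=> s1 n1; elim: j => [|j IH].
  by rewrite !addn0 big_geq // subrr mul0r.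
rewrite addnS big_nat_recr /=; last by rewrite leq_addr.
have := @key_ineq R s (n + j).+1%:R s1.
have h1 : 1 < (n + j).+1%:R :> R by rewrite ltr1n ltnS (leq_trans n1) // leq_addr.
move=> /(_ h1).
rewrite -natr1 addrK => h.
rewrite addnS -natr1.
have s0 : 0 < s - 1 by lra.
set a := n%:R `^ (1 - s) in IH *; set b := (n + j)%:R `^ (1 - s) in IH h *.
set c := ((n + j)%:R + 1) `^ (1 - s) in h *; set d := ((n + j)%:R + 1) `^ (- s) in h *.
have h2 : d <= (b - c) / (s - 1) by rewrite ler_pdivlMr //; lra.
have -> : (a - c) / (s - 1) = (a - b) / (s - 1) + (b - c) / (s - 1).
  by rewrite -mulrDl; congr (_ * _); lra.
exact: lerD.
Qed.

End Anal2.

Section Anal3.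
Variable R : realType.

Lemma eseries_tail (a : nat -> R) (C s : R) n : 0 <= C -> 1 < s -> (1 <= n)%N ->
 (forall k, (n.+1 <= k)%N -> 0 <= a k <= C * k%:R `^ (-s)) ->
 (\sum_(n.+1 <= k <oo) (a k)%:E <= (C * n%:R `^ (1 - s) / (s - 1))%:E)%E.
Proof.
move=> C0 s1 n1 ha.
have s0 : 0 < s - 1 by lra.
have bnd0 : 0 <= n%:R `^ (1 - s) / (s - 1) by rewrite divr_ge0 ?powR_ge0 // ltW.
apply: lime_le.
  by apply: is_cvg_nneseries => k kn _; rewrite lee_fin; case/andP: (ha k kn).
apply: nearW => N /=.
rewrite sumEFin lee_fin.
case: (leqP N n.+1) => hN.
  by rewrite big_geq // -mulrA mulr_ge0.
apply: (@le_trans _ _ (\sum_(n.+1 <= k < N) (C * k%:R `^ (-s)))).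
  apply: ler_sum_nat => k /andP [k1 _]; by case/andP: (ha k k1).
rewrite -(subnKC (ltnW hN)) -mulr_sumr -mulrA; apply: ler_wpM2l => //.
apply: (le_trans (@tail_sum R s n (N - n.+1) s1 n1)).
rewrite ler_pdivrMr // divfK ?gt_eqF //.
by rewrite gerBl powR_ge0.
Qed.

End Anal3.

End P8.
Import P8.

Local Open Scope classical_set_scope.
Local Open Scope ring_scope.

Theorem mainTheorem12 (R : realType) (P : probability Cube R)
  (f : Cube -> bool) (p : R) :
  uniform_product P ->
  measurable_fun setT f ->
  0 < p ->
  knowable P p f ->
  (forall q : R, 0 < q -> 1 < p * q ->
     forall n : nat, (1 <= n)%N ->
       (\sum_(n.+1 <= k <oo) ((influence P f k) `^ q)%:E
        <= ((EmaxWp P p f) `^ q * ((n%:R : R) `^ (1 - p * q)) / (p * q - 1))%:E)%E)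
  /\ (2^-1 < p -> (Hf P f < +oo)%E).
Proof.
move=> uP mf p0 [fin intfin].
set E := EmaxWp P p f.
have ige0 : (0 <= \int[P]_w (((maxW P f w)%:R : R) `^ p)%:E)%E.
  by apply: integral_ge0 => w _; rewrite lee_fin powR_ge0.
have Int : (\int[P]_w (((maxW P f w)%:R : R) `^ p)%:E = E%:E)%E.
  by rewrite /E /EmaxWp fineK // ge0_fin_numE.
have E0 : 0 <= E by rewrite -lee_fin -Int.
have PD k : P (Dk f k) = (influence P f k)%:E.
  rewrite /influence fineK //; rewrite ge0_fin_numE ?measure_ge0 //.
  apply: (@le_lt_trans _ _ 1%E); [apply: probability_le1; exact: Dk_meas|exact: ltry].
have I0 k : 0 <= influence P f k by rewrite -lee_fin -PD measure_ge0.
have infl k : (1 <= k)%N -> influence P f k <= E * k%:R `^ (- p).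
  move=> k1; have h := @infl_int R P f uP mf p p0 fin k.
  rewrite Int PD -EFinM lee_fin in h.
  have kp : 0 < k%:R `^ p by apply: powR_gt0; rewrite ltr0n.
  by rewrite powRN ler_pdivlMr // mulrC.
have part1 : forall q : R, 0 < q -> 1 < p * q -> forall n : nat, (1 <= n)%N ->
       (\sum_(n.+1 <= k <oo) ((influence P f k) `^ q)%:E
        <= ((EmaxWp P p f) `^ q * ((n%:R : R) `^ (1 - p * q)) / (p * q - 1))%:E)%E.
  move=> q q0 pq n n1; apply: eseries_tail => //; first exact: powR_ge0.
  move=> k kn; rewrite powR_ge0 /=.
  have k1 : (1 <= k)%N by apply: leq_trans kn.
  apply: (le_trans (ge0_ler_powR (ltW q0) _ _ (infl k k1))).
  - by rewrite nnegrE.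
  - by rewrite nnegrE mulr_ge0 // powR_ge0.
  by rewrite powRM ?powR_ge0 // -powRrM mulNr.
split => // p2.
have pq : 1 < p * 2 by lra.
have h := part1 2 (ltr0Sn R 1) pq 1%N (leqnn 1).
rewrite /Hf (nneseries_split 0 2); last by move=> k _; rewrite lee_fin sqr_ge0.
apply: lte_add_pinfty; first by rewrite sumEFin ltry.
rewrite add0n.
have -> : (\sum_(2 <= k <oo) ((influence P f k) ^+ 2)%:E = \sum_(2 <= k <oo) ((influence P f k) `^ 2)%:E)%E.
  by apply: eq_eseriesr => k _; rewrite (powR_mulrn 2 (I0 k)).
by apply: le_lt_trans h _; exact: ltry.
Qed.
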